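(* For every positive integer $m$, \[ {}_{H}w_{m}(x)=(1+x-m)\,w_{m-1}(x)+(1+x)\sum_{k=1}^{m-1}\binom{m}{k}w_{k-1}(x)\,w_{m-k}(x). \]
   Context: $\genfrac{\{}{\}}{0pt}{}{n}{k}$ denotes the Stirling numbers of the second kind. The geometric polynomials are $w_n(x)=\sum_{k=0}^{n}\genfrac{\{}{\}}{0pt}{}{n}{k}k!\,x^k$ (so $w_0(x)=1$). With $H_k=\sum_{i=1}^k 1/i$, the harmonic geometric polynomials are ${}_{H}w_n(x)=\sum_{k=1}^{n}\genfrac{\{}{\}}{0pt}{}{n}{k}k!\,H_k\,x^k$. *)

(* Defs.v *)
From mathcomp Require Import all_boot all_order all_algebra.
Unset Printing Implicit Defensive.
Import GRing.Theory Num.Theory.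
Local Open Scope ring_scope.

Fixpoint stirling2 (n k : nat) : nat :=
  match n, k with
  | 0, 0 => 1
  | 0, _.+1 => 0
  | _.+1, 0 => 0
  | n'.+1, k'.+1 => (k'.+1 * stirling2 n' k'.+1 + stirling2 n' k')%N
  end.

Definition harmonic (R : numFieldType) (k : nat) : R :=
  \sum_(1 <= i < k.+1) (i%:R)^-1.

Definition geom_poly (R : numFieldType) (n : nat) (x : R) : R :=
  \sum_(0 <= k < n.+1) (stirling2 n k * k`!)%:R * x ^+ k.

Definition harm_geom_poly (R : numFieldType) (n : nat) (x : R) : R :=
  \sum_(1 <= k < n.+1) (stirling2 n k * k`!)%:R * harmonic R k * x ^+ k.

(* Main.v *)
Require Import Defs.
From mathcomp Require Import all_boot all_order all_algebra.
From mathcomp Require Import ring lra zify.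
Import GRing.Theory Num.Theory.
Local Open Scope ring_scope.

Definition T (n k : nat) : nat := (stirling2 n k * k`!)%N.

Lemma stir0l k : stirling2 0 k = (k == 0)%N.
Proof. by case: k. Qed.

Lemma stir0r n : stirling2 n 0 = (n == 0)%N.
Proof. by case: n. Qed.

Lemma stir_gt n k : (n < k)%N -> stirling2 n k = 0%N.
Proof.
elim: n k => [|n IH] [|k] //= h.
rewrite !IH //; lia.
Qed.

Lemma T_gt n k : (n < k)%N -> T n k = 0%N.
Proof. by move=> h; rewrite /T stir_gt. Qed.

Lemma T_rec n k : T n.+1 k = (k * (T n k + T n k.-1))%N.
Proof.
case: k => [|k]; first by rewrite /T.
rewrite /T /= factS. ring.
Qed.

Lemma T0 n : T n 0 = (n == 0)%N.
Proof. by rewrite /T stir0r muln1. Qed.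

Lemma bump0 i : bump 0 i = i.+1.
Proof. by rewrite /bump leq0n add1n. Qed.

Lemma leib (f : nat -> nat -> nat) n :
  (\sum_(k < n.+2) 'C(n.+1, k) * f k (n.+1 - k) =
   \sum_(k < n.+1) 'C(n, k) * (f k (n.+1 - k) + f k.+1 (n - k)))%N.
Proof.
rewrite big_ord_recl /= bin0 subn0.
under eq_bigr do rewrite binS mulnDl subSS.
rewrite big_split /=.
under [X in (_ = X)%N]eq_bigr do rewrite mulnDr.
rewrite [in RHS]big_split /= [in RHS](big_ord_recl n) /= bin0 subn0.
rewrite (big_ord_recr n (fun i : 'I_n.+1 => 'C(n, i.+1) * f (bump 0 i) (n - i))%N) /= bin_small //.
rewrite mul0n addn0 mul1n.
under eq_bigr do rewrite bump0.
rewrite addnA; congr (_ + _)%N; apply: eq_bigr => i _; by rewrite bump0.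
Qed.

Lemma T_conv n a b :
  (\sum_(k < n.+1) 'C(n, k) * (T k a * T (n - k) b) = T n (a + b))%N.
Proof.
elim: n a b => [|n IH] a b.
  rewrite big_ord_recl big_ord0 /= /T.
  by case: a => [|a]; case: b => [|b].
rewrite (leib (fun k l => T k a * T l b)%N).
rewrite (eq_bigr (fun k : 'I_n.+1 =>
   b * ('C(n, k) * (T k a * T (n - k) b)) + b * ('C(n, k) * (T k a * T (n - k) b.-1))
 + (a * ('C(n, k) * (T k a * T (n - k) b)) + a * ('C(n, k) * (T k a.-1 * T (n - k) b))))%N); last first.
  move=> i _; rewrite subSn; last by rewrite -ltnS.
  rewrite !T_rec; ring.
rewrite !big_split /= -!big_distrr /= !IH T_rec.
case: a => [|a]; case: b => [|b]; rewrite /= ?addn0 ?addnS ?addSn /=; ring.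
Qed.

Lemma diag (V : zmodType) (m : nat) (G : nat -> nat -> V) :
  (forall a k, (m < k)%N -> G a k = 0) ->
  \sum_(k < m.+1) \sum_(a < k.+1) G a k = \sum_(a < m.+1) \sum_(b < m.+1) G a (a + b)%N.
Proof.
move=> HG.
have E1 : forall a : 'I_m.+1, \sum_(b < m.+1) G a (a + b)%N = \sum_(k < m.+1 | (a <= k)%N) G a k.
  move=> a.
  rewrite -(big_mkord xpredT (fun b => G a (a + b)%N)).
  rewrite (@big_cat_nat _ _ _ (m.+1 - a)%N) //=; last by rewrite leq_subr.
  rewrite [X in _ + X]big_nat_cond [X in _ + X]big1 ?addr0; last first.
    move=> i /andP [/andP [h1 h2] _]; apply: HG.
    have := ltn_ord a. lia.
  rewrite -(big_geq_mkord a m.+1 xpredT (G a)).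
  have := big_addn 0 m.+1 a xpredT (G a); rewrite add0n => ->.
  by apply: eq_bigr => i _; rewrite addnC.
rewrite (eq_bigr _ (fun a _ => E1 a)).
under [RHS]eq_bigr do rewrite big_mkcond /=.
rewrite exchange_big /=.
apply: eq_bigr => k _.
rewrite -big_mkcond /=.
rewrite (big_ord_widen m.+1 (fun a => G a k)) //.
Qed.

Section RPart.
Variables (R : numFieldType) (x : R).

Definition w n := geom_poly R n x.
Definition ell j := \sum_(a < j.+1) (T j a)%:R * (a%:R^-1 * x ^+ a).

Lemma w_ord n : w n = \sum_(k < n.+1) (T n k)%:R * x ^+ k.
Proof. by rewrite /w /geom_poly big_mkord. Qed.

Lemma widen n N (f : nat -> R) : (n <= N)%N ->
  \sum_(k < n.+1) (T n k)%:R * f k = \sum_(k < N.+1) (T n k)%:R * f k.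
Proof.
move=> h; rewrite (big_ord_widen N.+1 (fun k => (T n k)%:R * f k)) // big_mkcond /=.
apply: eq_bigr => i _; case: ifP => // /negbT; rewrite -leqNgt => hi.
by rewrite T_gt ?mul0r.
Qed.

Lemma ell0 : ell 0 = 0.
Proof. by rewrite /ell big_ord1 invr0 mul0r mulr0. Qed.

Lemma ellS j : ell j.+1 = (1 + x) * w j - (j == 0)%:R.
Proof.
rewrite /ell big_ord_recl /= invr0 mul0r add0r.
rewrite (eq_bigr (fun i : 'I_j.+1 => (T j i.+1)%:R * x ^+ i.+1 + (T j i)%:R * x ^+ i.+1)); last first.
  move=> i _; rewrite bump0 T_rec natrM natrD.
  have hc : (i.+1%:R : R) != 0 by rewrite pnatr_eq0.
  have -> : forall (c s y : R), c * s * (c^-1 * y) = (c * c^-1) * (s * y) by move=> *; ring.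
  by rewrite mulfV // mul1r /= mulrDl.
rewrite big_split /= w_ord.
rewrite big_ord_recr /= T_gt // mul0r addr0.
rewrite [in RHS]big_ord_recl /= T0.
under [in RHS]eq_bigr do rewrite bump0.
have -> : \sum_(i < j.+1) (T j i)%:R * x ^+ i.+1 =
    x * ((j == 0%N)%:R * x ^+ 0 + \sum_(i < j) (T j i.+1)%:R * x ^+ i.+1).
  rewrite big_ord_recl /= T0 mulrDr mulr_sumr.
  under eq_bigr do rewrite bump0.
  congr (_ + _); first by rewrite expr1 expr0 mulr1 mulrC.
  by apply: eq_bigr => i _; rewrite exprS; ring.
ring.
Qed.
Lemma harm_ord m : harm_geom_poly R m x =
  \sum_(k < m.+1) (T m k)%:R * \sum_(a < k.+1) a%:R^-1 * x ^+ a * x ^+ (k - a).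
Proof.
have H k : \sum_(a < k.+1) a%:R^-1 * x ^+ a * x ^+ (k - a) = harmonic R k * x ^+ k.
  rewrite (eq_bigr (fun a : 'I_k.+1 => a%:R^-1 * x ^+ k)); last first.
    by move=> a _; rewrite -mulrA -exprD subnKC // -ltnS.
  rewrite -big_distrl /harmonic; congr (_ * _).
  rewrite -(big_mkord xpredT (fun a => a%:R^-1)) big_ltn //.
  by rewrite invr0; apply: add0r.
under eq_bigr do rewrite H.
rewrite /harm_geom_poly -(big_mkord xpredT (fun k => (T m k)%:R * (harmonic R k * x ^+ k))) big_ltn //.
rewrite (_ : harmonic R 0 = 0) ?mul0r ?mulr0 ?add0r; last by rewrite /harmonic big_geq.
by apply: eq_bigr => k _; rewrite mulrA.
Qed.

Lemma Bconv m : harm_geom_poly R m x = \sum_(j < m.+1) 'C(m, j)%:R * ell j * w (m - j).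
Proof.
rewrite harm_ord.
rewrite (eq_bigr (fun k : 'I_m.+1 => \sum_(a < k.+1) (T m k)%:R * (a%:R^-1 * x ^+ a * x ^+ (k - a)))); last first.
  by move=> k _; rewrite mulr_sumr.
rewrite (@diag _ m (fun a k => (T m k)%:R * (a%:R^-1 * x ^+ a * x ^+ (k - a)))); last first.
  by move=> a k h; rewrite T_gt // mul0r.
symmetry.
rewrite (eq_bigr (fun j : 'I_m.+1 => \sum_(a < m.+1) \sum_(b < m.+1)
   ('C(m, j) * (T j a * T (m - j) b))%:R * (a%:R^-1 * x ^+ a * x ^+ b))); last first.
  move=> j _.
  have hj : (j <= m)%N by rewrite -ltnS.
  rewrite /ell w_ord (widen j m (fun a => a%:R^-1 * x ^+ a)) //.
  rewrite (widen (m - j) m (fun b => x ^+ b)) ?leq_subr //.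
  rewrite -mulrA mulr_suml mulr_sumr; apply: eq_bigr => a _.
  rewrite mulr_sumr mulr_sumr; apply: eq_bigr => b _.
  rewrite !natrM; ring.
rewrite exchange_big /=; apply: eq_bigr => a _.
rewrite exchange_big /=; apply: eq_bigr => b _.
by rewrite -big_distrl /= -natr_sum T_conv addKn mulrC.
Qed.
End RPart.

Lemma w0 (R : numFieldType) (x : R) : w R x 0 = 1.
Proof. by rewrite w_ord big_ord1 T0 expr0 mulr1. Qed.

Theorem theorem2 (R : numFieldType) (m : nat) (x : R) : (0 < m)%N ->
  harm_geom_poly R m x =
    (1 + x - m%:R) * geom_poly R m.-1 x
    + (1 + x) * \sum_(1 <= k < m) 'C(m, k)%:R * geom_poly R k.-1 x * geom_poly R (m - k) x.
Proof.
case: m => // n _.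
rewrite (Bconv R x) big_ord_recl ell0 mulr0 mul0r add0r.
under eq_bigr => i _ do rewrite lift0 ellS subSS.
rewrite big_ord_recr /= subnn binn w0 mulr1 mul1r.
rewrite big_add1 /= big_mkord.
rewrite -!/(w R x _).
under [in RHS]eq_bigr do rewrite subSS.
rewrite -!/(w R x _).
have -> : \sum_(i < n) 'C(n.+1, i.+1)%:R * ((1 + x) * w R x i - (i == 0%N :> nat)%:R) * w R x (n - i)
  = (1 + x) * \sum_(i < n) 'C(n.+1, i.+1)%:R * w R x i * w R x (n - i)
    - \sum_(i < n) 'C(n.+1, i.+1)%:R * (i == 0%N :> nat)%:R * w R x (n - i).
  rewrite mulr_sumr -sumrB; apply: eq_bigr => i _; ring.
case: n => [|n]; first by rewrite !big_ord0 /= w0; ring.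
have -> : \sum_(i < n.+1) 'C(n.+2, i.+1)%:R * (i == 0%N :> nat)%:R * w R x (n.+1 - i)
   = n.+2%:R * w R x n.+1.
  rewrite big_ord_recl big1 /= ?bin1 ?subn0 ?mulr1 ?addr0 //.
  by move=> i _; rewrite mulr0 mul0r.
rewrite /w /=; ring.
Qed.
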